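(* For a prime $N\ge3$, \[ \frac1{N-1}\sum_{w=1}^{N-1}\frac1{N^2}\sum_{h=1}^{N-1}\frac{\cot^2(\pi hw/N)}{h^2}=\frac{N-2}{3N^2}H_{N-1}(2)\le\frac{\pi^2}{18N}. \]
   Context: $H_n(a)=\sum_{h=1}^n h^{-a}$ denotes the harmonic number of order $a$. *)

(* Defs.v *)
From Stdlib Require Import Reals Znumtheory.
Open Scope R_scope.

Definition cot (x : R) : R := cos x / sin x.

Fixpoint sum1 (n : nat) (f : nat -> R) : R :=
  match n with
  | O => 0
  | S m => sum1 m f + f (S m)
  end.

(* Harmonic number of order a (a real): H_n(a) = sum_{h=1}^n h^{-a};
   here we only need integer order, stated for natural a via pow. *)
Definition H (n : nat) (a : nat) : R := sum1 n (fun h => / (INR h) ^ a).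

(* Main.v *)
Require Import Defs.
From Stdlib Require Import Reals ZArith Znumtheory Lia Lra.
Open Scope R_scope.

Lemma sum1_ext n f g : (forall k, (1 <= k <= n)%nat -> f k = g k) -> sum1 n f = sum1 n g.
Proof. induction n; simpl; intros Hk; auto. rewrite IHn; [rewrite Hk; auto; lia|]. intros; apply Hk; lia. Qed.

Lemma sum1_plus n f g : sum1 n (fun k => f k + g k) = sum1 n f + sum1 n g.
Proof. induction n; simpl; [ring|rewrite IHn; ring]. Qed.

Lemma sum1_minus n f g : sum1 n (fun k => f k - g k) = sum1 n f - sum1 n g.
Proof. induction n; simpl; [ring|rewrite IHn; ring]. Qed.

Lemma sum1_scal n c f : sum1 n (fun k => c * f k) = c * sum1 n f.
Proof. induction n; simpl; [ring|rewrite IHn; ring]. Qed.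

Lemma sum1_swap n m (F : nat -> nat -> R) :
  sum1 n (fun i => sum1 m (fun j => F i j)) = sum1 m (fun j => sum1 n (fun i => F i j)).
Proof. induction n; simpl. - induction m; simpl; [ring|rewrite <- IHm; ring].
 - rewrite IHn, <- sum1_plus. reflexivity. Qed.

Lemma sum1_mult n f g : sum1 n f * sum1 n g = sum1 n (fun j => sum1 n (fun l => f j * g l)).
Proof. transitivity (sum1 n (fun j => f j * sum1 n g)).
 - generalize (sum1 n g) as c. intro c. induction n as [|n IH]; simpl; [ring|]. rewrite <- IH. ring.
 - apply sum1_ext; intros; now rewrite sum1_scal. Qed.

Lemma sum1_delta n f t : (1 <= t <= n)%nat ->
  sum1 n (fun l => f l * (if Nat.eqb l t then 1 else 0)) = f t.
Proof. induction n; intros Ht; [lia|]. simpl.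
 destruct (Nat.eq_dec t (S n)) as [->|Hne].
 - rewrite Nat.eqb_refl. rewrite (sum1_ext _ _ (fun _ => 0)). 
   + clear. assert (sum1 n (fun _ => 0) = 0) as ->. { induction n; simpl; [ring| rewrite IHn; ring]. } ring.
   + intros k Hk. destruct (Nat.eqb_spec k (S n)). lia. apply Rmult_0_r.
 - rewrite IHn by lia. assert (E: Nat.eqb (S n) t = false) by (apply Nat.eqb_neq; lia). simpl Nat.eqb in E. rewrite E. ring. Qed.

Lemma sum1_shift1 n g : sum1 (S n) g = g 1%nat + sum1 n (fun k => g (S k)).
Proof. induction n; simpl in *; [ring|]. rewrite IHn. ring. Qed.

Lemma sum1_rev n f : sum1 n f = sum1 n (fun k => f (S n - k)%nat).
Proof. induction n; auto. rewrite (sum1_shift1 n (fun k => f (S (S n) - k)%nat)).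
 change (sum1 (S n) f) with (sum1 n f + f (S n)). rewrite IHn.
 replace (S (S n) - 1)%nat with (S n) by lia. rewrite Rplus_comm. f_equal. Qed.

Lemma sum1_split a b f : sum1 (a + b) f = sum1 a f + sum1 b (fun k => f (a + k)%nat).
Proof. induction b; simpl. rewrite Nat.add_0_r; ring. rewrite Nat.add_succ_r. simpl. rewrite IHb. ring. Qed.

Lemma sum1_id n : sum1 n INR = INR n * (INR n + 1) / 2.
Proof. induction n. simpl; field. change (sum1 (S n) ?f) with (sum1 n f + f (S n)). rewrite IHn, S_INR. field. Qed.

Lemma sum1_sq n : sum1 n (fun j => INR j * INR j) = INR n * (INR n + 1) * (2 * INR n + 1) / 6.
Proof. induction n. simpl; field. change (sum1 (S n) ?f) with (sum1 n f + f (S n)). rewrite IHn, S_INR. field. Qed.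

Lemma S_ident n x : 4 * sin x ^ 2 * sum1 n (fun j => INR j * sin (2 * INR j * x))
  = sin (2 * INR n * x) - 2 * sin x * INR n * cos ((2 * INR n + 1) * x).
Proof. induction n.
 - simpl. replace (2*0*x) with 0 by ring. rewrite sin_0. ring.
 - change (sum1 (S n) ?f) with (sum1 n f + f (S n)).
   rewrite Rmult_plus_distr_l, IHn, S_INR.
   set (y := (2 * INR n + 1) * x).
   replace (2 * (INR n + 1) * x) with (y + x) by (unfold y; ring).
   replace (2 * INR n * x) with (y - x) by (unfold y; ring).
   replace ((2 * (INR n + 1) + 1) * x) with (y + 2 * x) by (unfold y; ring).
   rewrite sin_plus, sin_minus, cos_plus, sin_2a, cos_2a_sin. ring. Qed.

Lemma orth_ident n b : 2 * sin (b / 2) * sum1 n (fun w => cos (INR w * b))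
  = sin ((INR n + /2) * b) - sin (b / 2).
Proof. induction n.
 - simpl. replace ((0 + /2) * b) with (b/2) by field. ring.
 - change (sum1 (S n) ?f) with (sum1 n f + f (S n)).
   rewrite Rmult_plus_distr_l, IHn, S_INR.
   set (y := (INR n + 1) * b).
   replace ((INR n + / 2) * b) with (y - b/2) by (unfold y; field).
   replace ((INR n + 1 + / 2) * b) with (y + b/2) by (unfold y; field).
   rewrite sin_plus, sin_minus. ring. Qed.

Lemma sin_perZ x m : sin (x + 2 * IZR m * PI) = sin x.
Proof. destruct (Z.le_gt_cases 0 m).
 - rewrite <- (Z2Nat.id m) by lia. rewrite <- INR_IZR_INZ. apply sin_period.
 - replace m with (- Z.of_nat (Z.to_nat (- m)))%Z by lia. rewrite opp_IZR, <- INR_IZR_INZ.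
   set (p := Z.to_nat (-m)). rewrite <- (sin_period (x + 2 * - INR p * PI) p). f_equal; ring. Qed.

Lemma cos_perZ x m : cos (x + 2 * IZR m * PI) = cos x.
Proof. destruct (Z.le_gt_cases 0 m).
 - rewrite <- (Z2Nat.id m) by lia. rewrite <- INR_IZR_INZ. apply cos_period.
 - replace m with (- Z.of_nat (Z.to_nat (- m)))%Z by lia. rewrite opp_IZR, <- INR_IZR_INZ.
   set (p := Z.to_nat (-m)). rewrite <- (cos_period (x + 2 * - INR p * PI) p). f_equal; ring. Qed.

Lemma INR_posN N : (1 <= N)%nat -> 0 < INR N.
Proof. intro; apply lt_0_INR; lia. Qed.

Lemma cot_repr (N m : nat) x : (1 <= N)%nat -> INR N * x = PI * INR m -> sin x <> 0 ->
  cot x = -2 / INR N * sum1 (N - 1) (fun j => INR j * sin (2 * INR j * x)).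
Proof. intros HN Hx Hs. pose proof (INR_posN N HN) as HNp.
 pose proof (S_ident (N - 1) x) as E. rewrite minus_INR in E by lia. simpl INR in E.
 replace (2 * (INR N - 1) * x) with (- (2 * x) + 2 * INR m * PI) in E by nra.
 replace ((2 * (INR N - 1) + 1) * x) with (- x + 2 * INR m * PI) in E by nra.
 rewrite sin_period, cos_period, sin_neg, cos_neg, sin_2a in E.
 set (S := sum1 _ _) in *.
 assert (HS : S = - INR N * cos x / (2 * sin x)).
 { apply (Rmult_eq_reg_l (4 * sin x ^ 2)). rewrite E. field. auto. 
   apply Rmult_integral_contrapositive; split; [lra|]. apply pow_nonzero; auto. }
 rewrite HS. unfold cot. field. split; auto. lra. Qed.

Lemma orth_val (N : nat) (m : Z) : (1 <= N)%nat ->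
  sum1 (N - 1) (fun w => cos (INR w * (2 * PI * IZR m / INR N))) =
  if Znumtheory.Zdivide_dec (Z.of_nat N) m then INR N - 1 else -1.
Proof. intros HN. pose proof (INR_posN N HN) as HNp. destruct (Zdivide_dec (Z.of_nat N) m) as [[q Hq]|Hnd].
 - rewrite (sum1_ext _ _ (fun _ => 1)).
   + replace (INR N - 1) with (INR (N-1)) by (rewrite minus_INR by lia; reflexivity). clear. induction (N-1)%nat; simpl sum1. simpl; ring. rewrite IHn, S_INR. ring.
   + intros w _. subst m. rewrite mult_IZR, <- INR_IZR_INZ.
     replace (INR w * (2 * PI * (IZR q * INR N) / INR N)) with (0 + 2 * IZR (Z.of_nat w * q) * PI).
     rewrite cos_perZ. apply cos_0. rewrite mult_IZR, <- INR_IZR_INZ. field. lra.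
 - set (b := 2 * PI * IZR m / INR N).
   assert (Hs : sin (b/2) <> 0).
   { intro H0. apply sin_eq_0_0 in H0. destruct H0 as [k Hk]. apply Hnd. exists k.
     apply eq_IZR. rewrite mult_IZR, <- INR_IZR_INZ.
     pose proof PI_RGT_0. apply (Rmult_eq_reg_r (PI / INR N)). transitivity (b/2). unfold b; field; lra. rewrite Hk. field. lra.
     apply Rgt_not_eq. apply Rdiv_lt_0_compat; lra. }
   pose proof (orth_ident (N - 1) b) as E. rewrite minus_INR in E by lia. simpl INR in E.
   replace ((INR N - 1 + / 2) * b) with (- (b/2) + 2 * IZR m * PI) in E by (unfold b; field; lra).
   rewrite sin_perZ, sin_neg in E.
   apply (Rmult_eq_reg_l (2 * sin (b / 2))). rewrite E. ring. lra. Qed.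

Lemma D_val N h j l : (2 <= N)%nat ->
  (forall m, (Z.of_nat N | m * Z.of_nat h)%Z -> (Z.of_nat N | m)%Z) ->
  (1 <= j <= N - 1)%nat -> (1 <= l <= N - 1)%nat ->
  sum1 (N - 1) (fun w => sin (2 * INR j * (PI * INR h * INR w / INR N)) *
                         sin (2 * INR l * (PI * INR h * INR w / INR N)))
  = INR N / 2 * ((if Nat.eqb l j then 1 else 0) - (if Nat.eqb l (N - j) then 1 else 0)).
Proof. intros HN Hcop Hj Hl. pose proof (INR_posN N ltac:(lia)) as HNp.
 set (m1 := ((Z.of_nat j - Z.of_nat l) * Z.of_nat h)%Z).
 set (m2 := ((Z.of_nat j + Z.of_nat l) * Z.of_nat h)%Z).
 rewrite (sum1_ext _ _ (fun w => / 2 * (cos (INR w * (2 * PI * IZR m1 / INR N)) - cos (INR w * (2 * PI * IZR m2 / INR N))))).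
 2:{ intros w _. unfold m1, m2. rewrite !mult_IZR, minus_IZR, plus_IZR, <- !INR_IZR_INZ.
     set (u := 2 * INR j * (PI * INR h * INR w / INR N)).
     set (v := 2 * INR l * (PI * INR h * INR w / INR N)).
     replace (INR w * (2 * PI * ((INR j - INR l) * INR h) / INR N)) with (u - v) by (unfold u, v; field; lra).
     replace (INR w * (2 * PI * ((INR j + INR l) * INR h) / INR N)) with (u + v) by (unfold u, v; field; lra).
     rewrite cos_minus, cos_plus. field. }
 rewrite sum1_scal, sum1_minus, !orth_val by lia.
 assert (E1 : (if Zdivide_dec (Z.of_nat N) m1 then INR N - 1 else -1) = if Nat.eqb l j then INR N - 1 else -1).
 { destruct (Nat.eqb_spec l j) as [->|Hne]; destruct (Zdivide_dec (Z.of_nat N) m1) as [Hd|Hd]; auto.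
   - exfalso. apply Hd. unfold m1. rewrite Z.sub_diag. exists 0%Z. lia.
   - exfalso. apply Hcop in Hd. destruct Hd as [q Hq]. assert (q >= 1 \/ q <= -1 \/ q = 0)%Z as [Q|[Q|Q]] by lia; nia. }
 assert (E2 : (if Zdivide_dec (Z.of_nat N) m2 then INR N - 1 else -1) = if Nat.eqb l (N - j) then INR N - 1 else -1).
 { destruct (Nat.eqb_spec l (N - j)) as [He|Hne]; destruct (Zdivide_dec (Z.of_nat N) m2) as [Hd|Hd]; auto.
   - exfalso. apply Hd. unfold m2. exists (Z.of_nat h). lia.
   - exfalso. apply Hcop in Hd. destruct Hd as [q Hq]. assert (q >= 2 \/ q <= 0 \/ q = 1)%Z as [Q|[Q|Q]] by lia; [nia|nia|subst q; lia]. }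
 rewrite E1, E2. destruct (Nat.eqb l j), (Nat.eqb l (N - j)); field. Qed.

Lemma cot_sum N h : (2 <= N)%nat ->
  (forall m, (Z.of_nat N | m * Z.of_nat h)%Z -> (Z.of_nat N | m)%Z) ->
  sum1 (N - 1) (fun w => cot (PI * INR h * INR w / INR N) ^ 2) = (INR N - 1) * (INR N - 2) / 3.
Proof. intros HN Hcop. pose proof (INR_posN N ltac:(lia)) as HNp. pose proof PI_RGT_0 as Hpi.
 rewrite (sum1_ext _ _ (fun w => 4 / INR N ^ 2 * sum1 (N-1) (fun j => sum1 (N-1) (fun l =>
    (INR j * sin (2 * INR j * (PI * INR h * INR w / INR N))) * (INR l * sin (2 * INR l * (PI * INR h * INR w / INR N))))))).
 2:{ intros w Hw. rewrite (cot_repr N (h * w)); [| lia | rewrite mult_INR; field; lra |].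
     - rewrite <- sum1_mult. field. lra.
     - intro H0. apply sin_eq_0_0 in H0. destruct H0 as [k Hk].
       assert (Hd : (Z.of_nat N | Z.of_nat w * Z.of_nat h)%Z).
       { exists k. apply eq_IZR. rewrite !mult_IZR, <- !INR_IZR_INZ.
         apply (Rmult_eq_reg_r (PI / INR N)). transitivity (PI * INR h * INR w / INR N). field; lra.
         rewrite Hk. field; lra. apply Rgt_not_eq. apply Rdiv_lt_0_compat; lra. }
       apply Hcop in Hd. destruct Hd as [q Hq].
       clear Hk Hpi HNp Hcop. assert (q >= 1 \/ q <= 0)%Z as [Q|Q] by lia.
       + assert ((q-1) * Z.of_nat N >= 0)%Z by nia. lia.
       + assert (q * Z.of_nat N <= 0)%Z by nia. lia. }
 rewrite sum1_scal, sum1_swap.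
 rewrite (sum1_ext _ _ (fun j => sum1 (N - 1) (fun l => INR j * INR l * (INR N / 2) * (if Nat.eqb l j then 1 else 0)
     - INR j * INR l * (INR N / 2) * (if Nat.eqb l (N - j) then 1 else 0)))).
 2:{ intros j Hj. rewrite sum1_swap. apply sum1_ext. intros l Hl.
     rewrite (sum1_ext _ _ (fun w => INR j * INR l * (sin (2 * INR j * (PI * INR h * INR w / INR N)) *
                         sin (2 * INR l * (PI * INR h * INR w / INR N))))).
     2:{ intros; ring. }
     rewrite sum1_scal, D_val by (assumption || lia). ring. }
 rewrite (sum1_ext _ _ (fun j => INR N * (INR j * INR j) + (- (INR N ^ 2 / 2)) * INR j)).
 2:{ intros j Hj. rewrite sum1_minus, !(sum1_delta _ (fun l => INR j * INR l * (INR N / 2))) by lia.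
     rewrite minus_INR by lia. field. }
 rewrite sum1_plus, !sum1_scal, sum1_sq, sum1_id, minus_INR by lia. simpl INR. field. lra. Qed.

Lemma sum1_le n f g : (forall k, (1 <= k <= n)%nat -> f k <= g k) -> sum1 n f <= sum1 n g.
Proof. induction n; simpl; intros Hk. lra. apply Rplus_le_compat. apply IHn; intros; apply Hk; lia. apply Hk; lia. Qed.

Lemma sum1_const n c : sum1 n (fun _ => c) = INR n * c.
Proof. induction n. simpl; ring. change (sum1 (S n) ?f) with (sum1 n f + f (S n)). rewrite IHn, S_INR; ring. Qed.

Lemma basel_bound m : H m 2 <= PI ^ 2 / 6.
Proof. pose proof PI_RGT_0 as Hpi.
 destruct m as [|m']. { unfold H; simpl. nra. }
 set (m := S m'). set (M := (2 * m + 1)%nat).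
 assert (HMp : 0 < INR M) by (apply lt_0_INR; unfold M; lia).
 set (f := fun w => / sin (PI * INR 1 * INR w / INR M) ^ 2).
 assert (Hsin : forall w, (1 <= w <= M - 1)%nat -> 0 < sin (PI * INR 1 * INR w / INR M)).
 { intros w Hw. assert (INR w < INR M) by (apply lt_INR; lia). assert (1 <= INR w) by (apply (le_INR 1); lia).
   apply sin_gt_0. change (INR 1) with 1. apply Rdiv_lt_0_compat; nra.
   change (INR 1) with 1. apply (Rmult_lt_reg_r (INR M)); auto. field_simplify; nra. }
 assert (HC := cot_sum M 1 ltac:(unfold M; lia) ltac:(intros z Hz; rewrite Z.mul_1_r in Hz; exact Hz)).
 assert (Hcsc : sum1 (M - 1) f = (INR M - 1) * (INR M - 2) / 3 + INR (M - 1)).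
 { rewrite <- HC, <- (Rmult_1_r (INR (M - 1))), <- sum1_const, <- sum1_plus. apply sum1_ext.
   intros w Hw. specialize (Hsin w Hw). unfold f, cot. set (x := PI * INR 1 * INR w / INR M) in *.
   pose proof (sin2_cos2 x) as E. unfold Rsqr in E.
   assert (/ sin x ^ 2 = (sin x * sin x + cos x * cos x) / sin x ^ 2) as -> by (rewrite E; field; lra).
   field. lra. }
 replace (M - 1)%nat with (m + m)%nat in Hcsc by (unfold M; lia).
 rewrite sum1_split, (sum1_rev m (fun k => f (m + k)%nat)) in Hcsc.
 rewrite (sum1_ext _ (fun k => f (m + (S m - k))%nat) f) in Hcsc.
 2:{ intros k Hk. unfold f. f_equal. f_equal.
     replace (PI * INR 1 * INR (m + (S m - k)) / INR M) with (PI - PI * INR 1 * INR k / INR M).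
     apply sin_PI_x. replace (m + (S m - k))%nat with (M - k)%nat by (unfold M; lia).
     rewrite (minus_INR M k) by (unfold M; lia). change (INR 1) with 1. field. lra.
     }
 assert (Hle : (INR M / PI) ^ 2 * H m 2 <= sum1 m f).
 { unfold H. rewrite <- sum1_scal. apply sum1_le. intros k Hk.
   assert (Hs := Hsin k ltac:(unfold M; lia)). unfold f.
   set (y := PI * INR 1 * INR k / INR M) in *.
   assert (Hy : 0 < y). { unfold y. change (INR 1) with 1. assert (1 <= INR k) by (apply (le_INR 1); lia). apply Rdiv_lt_0_compat; nra. }
   pose proof (sin_lt_x y Hy).
   replace ((INR M / PI) ^ 2 * / INR k ^ 2) with (/ y ^ 2).
   apply Rinv_le_contravar. nra. nra.
   unfold y. change (INR 1) with 1. assert (1 <= INR k) by (apply (le_INR 1); lia). field. lra. }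
 assert (HM : INR M = 2 * INR m + 1) by (unfold M; rewrite plus_INR, mult_INR; simpl; ring).
 rewrite plus_INR in Hcsc.
 assert (Hsm : sum1 m f = ((INR M - 1) * (INR M - 2) / 3 + (INR M - 1)) / 2).
 { rewrite HM in Hcsc |- *. lra. }
 apply Rle_trans with ((PI / INR M) ^ 2 * ((INR M - 1) * (INR M - 2) / 3 + (INR M - 1)) / 2).
 - replace (H m 2) with ((PI / INR M) ^ 2 * ((INR M / PI) ^ 2 * H m 2)) by (field; lra).
   assert (0 <= (PI / INR M) ^ 2) by (apply pow2_ge_0). apply Rle_trans with ((PI / INR M) ^ 2 * sum1 m f).
   apply Rmult_le_compat_l; auto. rewrite Hsm. right; field; lra.
 - assert (PI ^ 2 / 6 - (PI / INR M) ^ 2 * ((INR M - 1) * (INR M - 2) / 3 + (INR M - 1)) / 2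
     = PI ^ 2 / (6 * INR M ^ 2)) by (field; lra).
   assert (0 < PI ^ 2 / (6 * INR M ^ 2)) by (apply Rdiv_lt_0_compat; nra). lra.
Qed.

Theorem lemma3 (N : nat) (hN : (3 <= N)%nat) (hp : prime (Z.of_nat N)) :
  / INR (N - 1) *
    sum1 (N - 1) (fun w =>
      / (INR N) ^ 2 *
        sum1 (N - 1) (fun h =>
          (cot (PI * INR h * INR w / INR N)) ^ 2 / (INR h) ^ 2))
  = (INR N - 2) / (3 * (INR N) ^ 2) * H (N - 1) 2
  /\ (INR N - 2) / (3 * (INR N) ^ 2) * H (N - 1) 2 <= PI ^ 2 / (18 * INR N).
Proof.
 assert (HNp : 3 <= INR N) by (replace 3 with (INR 3) by (simpl; ring); apply le_INR; lia). pose proof PI_RGT_0 as Hpi.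
 split.
 - rewrite sum1_scal, sum1_swap.
   rewrite (sum1_ext _ _ (fun h => (INR N - 1) * (INR N - 2) / 3 * / INR h ^ 2)).
   + unfold H. rewrite sum1_scal, minus_INR by lia. change (INR 1) with 1. field. lra.
   + intros h Hh. rewrite (sum1_ext _ _ (fun w => / INR h ^ 2 * cot (PI * INR h * INR w / INR N) ^ 2)) by (intros; field; apply not_0_INR; lia).
     assert (Hcop : forall m, (Z.of_nat N | m * Z.of_nat h)%Z -> (Z.of_nat N | m)%Z).
     { intros m Hm. destruct (prime_mult _ hp _ _ Hm) as [Hd|Hd]; auto.
       exfalso. destruct Hd as [q Hq]. assert (q >= 1 \/ q <= 0)%Z as [Q|Q] by lia.
       - assert ((q-1) * Z.of_nat N >= 0)%Z by nia; lia.
       - assert (q * Z.of_nat N <= 0)%Z by nia; lia. }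
     rewrite sum1_scal, (cot_sum N h) by (assumption || lia).
     ring.
 - pose proof (basel_bound (N - 1)) as HB.
   assert (0 <= (INR N - 2) / (3 * INR N ^ 2)) by (apply Rlt_le, Rdiv_lt_0_compat; nra).
   apply Rle_trans with ((INR N - 2) / (3 * INR N ^ 2) * (PI ^ 2 / 6)).
   + apply Rmult_le_compat_l; auto.
   + assert (PI ^ 2 / (18 * INR N) - (INR N - 2) / (3 * INR N ^ 2) * (PI ^ 2 / 6) = PI ^ 2 / (9 * INR N ^ 2)) by (field; lra).
     assert (0 < PI ^ 2 / (9 * INR N ^ 2)) by (apply Rdiv_lt_0_compat; nra). lra.
Qed.
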